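(* Let $G=(V,E,s_0,s_1)$ be a switch graph and $o,d\in V$ with $o\neq d$. If there exists a switching flow $\mathbf{x}$, then $\textsc{Run}(G,o,d)$ terminates, and its run profile satisfies $\mathbf{x}(G,o,d)\le\mathbf{x}$ componentwise.
   Context: A switch graph is a 4-tuple $G=(V,E,s_0,s_1)$ where $V$ is a finite vertex set, $s_0,s_1:V\to V$, and $E=\{(v,s_0(v)):v\in V\}\cup\{(v,s_1(v)):v\in V\}$ (loops allowed; possibly $s_0(v)=s_1(v)$). The procedure $\textsc{Run}(G,o,d)$: maintain arrays $\mathtt{s\_curr},\mathtt{s\_next}$ indexed by $V$, initially $\mathtt{s\_curr}[v]=s_0(v)$, $\mathtt{s\_next}[v]=s_1(v)$; set $v:=o$; while $v\neq d$: $w:=\mathtt{s\_curr}[v]$, swap $\mathtt{s\_curr}[v],\mathtt{s\_next}[v]$, $v:=w$ (traversing edge $(v,w)$). When the run terminates, its run profile $\mathbf{x}(G,o,d):E\to\mathbb{N}_0$ assigns to each edge the number of times it was traversed. For $v\in V$, $E^+(v)$ and $E^-(v)$ denote the outgoing and incoming edges of $v$. A switching flow is a function $\mathbf{x}:E\to\mathbb{N}_0$, $e\mapsto x_e$, such that for all $v\in V$: (a) $\sum_{e\in E^+(v)}x_e-\sum_{e\in E^-(v)}x_e$ equals $1$ if $v=o$, $-1$ if $v=d$, and $0$ otherwise; and (b) $0\le x_{(v,s_1(v))}\le x_{(v,s_0(v))}\le x_{(v,s_1(v))}+1$. *)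

(* Defs.v *)
From mathcomp Require Import all_boot all_order all_algebra.
Set Implicit Arguments. Unset Strict Implicit. Unset Printing Implicit Defensive.
Import GRing.Theory Num.Theory.

Section SwitchGraph.
Variable V : finType.

(* A switch graph G = (V, E, s0, s1) is given by V and the two switch maps;
   its edge set E is determined by s0 and s1. Edges are pairs (v, w). *)
Definition switch_edges (s0 s1 : V -> V) : {set V * V} :=
  [set (v, s0 v) | v in V] :|: [set (v, s1 v) | v in V].

(* Switching flow x : E -> N (given as a function on V*V, only its values on E matter). *)
Definition is_switching_flow (s0 s1 : V -> V) (o d : V) (x : V * V -> nat) : Prop :=
  (forall v : V,
      ((\sum_(e in switch_edges s0 s1 | e.1 == v) x e)%:Z
       - (\sum_(e in switch_edges s0 s1 | e.2 == v) x e)%:Z)%R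
      = ((nat_of_bool (v == o))%:Z - (nat_of_bool (v == d))%:Z)%R)
  /\ (forall v : V, x (v, s1 v) <= x (v, s0 v) <= (x (v, s1 v)).+1).

Record run_state := RunState { rs_pos : V; rs_curr : V -> V; rs_next : V -> V }.

Definition run_step (s : run_state) : run_state :=
  let v := rs_pos s in
  RunState (rs_curr s v)
    (fun u => if u == v then rs_next s v else rs_curr s u)
    (fun u => if u == v then rs_curr s v else rs_next s u).

Definition run_init (s0 s1 : V -> V) (o : V) : run_state := RunState o s0 s1.

(* Vertex after k loop iterations (ignoring the loop guard). *)
Definition run_pos (s0 s1 : V -> V) (o : V) (k : nat) : V :=
  rs_pos (iter k run_step (run_init s0 s1 o)).

Definition run_terminates_at (s0 s1 : V -> V) (o d : V) (n : nat) : Prop :=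
  run_pos s0 s1 o n = d /\ (forall k, k < n -> run_pos s0 s1 o k != d).

Definition run_profile (s0 s1 : V -> V) (o : V) (n : nat) (e : V * V) : nat :=
  \sum_(k < n) ((run_pos s0 s1 o k, run_pos s0 s1 o k.+1) == e).

End SwitchGraph.

(* Main.v *)
Require Import Defs.
From mathcomp Require Import all_boot all_order all_algebra.
From mathcomp Require Import zify.
Set Implicit Arguments. Unset Strict Implicit. Unset Printing Implicit Defensive.

Definition st (V : finType) (s0 s1 : V -> V) o n := iter n (@run_step V) (run_init s0 s1 o).
Definition cnt (V : finType) (s0 s1 : V -> V) o n (v : V) := \sum_(k < n) (run_pos s0 s1 o k == v).

Lemma cntS (V : finType) (s0 s1 : V -> V) o n v :
  cnt s0 s1 o n.+1 v = cnt s0 s1 o n v + (run_pos s0 s1 o n == v).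
Proof. by rewrite /cnt big_ord_recr. Qed.

Lemma curr_inv (V : finType) (s0 s1 : V -> V) o n :
  (forall v, rs_curr (st s0 s1 o n) v = if odd (cnt s0 s1 o n v) then s1 v else s0 v) /\
  (forall v, rs_next (st s0 s1 o n) v = if odd (cnt s0 s1 o n v) then s0 v else s1 v).
Proof.
elim: n => [|n [IHc IHn]]; first by split=> v; rewrite /cnt big_ord0.
split=> v; rewrite cntS /run_pos -/(st s0 s1 o n) /=;
  case: (eqVneq v (rs_pos (st s0 s1 o n))) => [->|nv];
  rewrite ?eqxx ?addn1 /= ?IHc ?IHn //=; try by case: odd.
all: by rewrite addn0.
Qed.

Lemma pos_succ (V : finType) (s0 s1 : V -> V) o n :
  run_pos s0 s1 o n.+1 = if odd (cnt s0 s1 o n (run_pos s0 s1 o n)) then s1 (run_pos s0 s1 o n) else s0 (run_pos s0 s1 o n).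
Proof. by rewrite -(curr_inv s0 s1 o n).1. Qed.

Lemma profS (V : finType) (s0 s1 : V -> V) o n e :
  run_profile s0 s1 o n.+1 e = run_profile s0 s1 o n e + ((run_pos s0 s1 o n, run_pos s0 s1 o n.+1) == e).
Proof. by rewrite /run_profile big_ord_recr. Qed.

Lemma memE (V : finType) (s0 s1 : V -> V) (e : V * V) :
  (e \in switch_edges s0 s1) = (e.2 == s0 e.1) || (e.2 == s1 e.1).
Proof.
case: e => a b /=; rewrite /switch_edges inE.
apply/orP/orP => [[]|[]].
- by case/imsetP => u _ [-> ->]; left.
- by case/imsetP => u _ [-> ->]; right.
- by move/eqP ->; left; apply/imsetP; exists a.
- by move/eqP ->; right; apply/imsetP; exists a.
Qed.

Lemma edge_in (V : finType) (s0 s1 : V -> V) o n :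
  (run_pos s0 s1 o n, run_pos s0 s1 o n.+1) \in switch_edges s0 s1.
Proof. by rewrite memE /= pos_succ; case: odd; rewrite eqxx ?orbT. Qed.

Lemma prof_split (V : finType) (s0 s1 : V -> V) o v n : s0 v != s1 v ->
  run_profile s0 s1 o n (v, s0 v) + run_profile s0 s1 o n (v, s1 v) = cnt s0 s1 o n v /\
  run_profile s0 s1 o n (v, s0 v) = run_profile s0 s1 o n (v, s1 v) + odd (cnt s0 s1 o n v).
Proof.
move=> neq; elim: n => [|n [IH1 IH2]]; first by rewrite /run_profile /cnt !big_ord0.
rewrite !profS cntS pos_succ.
case: (eqVneq (run_pos s0 s1 o n) v) => [->|ne].
- rewrite !xpair_eqE /= !eqxx /=.
  case h: (odd (cnt s0 s1 o n v)); rewrite h in IH2.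
  + rewrite eq_sym (negbTE neq) eqxx /=. rewrite oddD h /=. lia.
  + rewrite (negbTE neq) eqxx /=. rewrite oddD h /=. lia.
- rewrite !xpair_eqE (negbTE ne) /=. rewrite !addn0. by split.
Qed.

Lemma prof_same (V : finType) (s0 s1 : V -> V) o v n : s0 v = s1 v ->
  run_profile s0 s1 o n (v, s0 v) = cnt s0 s1 o n v.
Proof.
move=> eq; elim: n => [|n IH]; first by rewrite /run_profile /cnt !big_ord0.
rewrite !profS cntS pos_succ IH.
case: (eqVneq (run_pos s0 s1 o n) v) => [->|ne].
- by rewrite -eq if_same eqxx.
- by rewrite xpair_eqE (negbTE ne).
Qed.

Lemma sum_ind (T : finType) (A : {set T}) (P : pred T) f :
  f \in A -> \sum_(e in A | P e) (f == e) = P f.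
Proof.
move=> fA; case Pf: (P f).
- rewrite (bigD1 f) ?fA ?Pf //= eqxx big1 // => e /andP [_ ne]; by rewrite eq_sym (negbTE ne).
- rewrite big1 // => e /andP [_ Pe]; case: eqP => // fe; by move: Pf; rewrite fe Pe.
Qed.

Lemma in_count (V : finType) (s0 s1 : V -> V) o n v :
  \sum_(e in switch_edges s0 s1 | e.2 == v) run_profile s0 s1 o n e =
  \sum_(k < n) (run_pos s0 s1 o k.+1 == v).
Proof.
rewrite /run_profile exchange_big /=; apply: eq_bigr => k _.
by rewrite (sum_ind (fun e : V * V => e.2 == v)) ?edge_in.
Qed.

Lemma tot_count (V : finType) (s0 s1 : V -> V) o n :
  \sum_(e in switch_edges s0 s1) run_profile s0 s1 o n e = n.
Proof.
rewrite /run_profile exchange_big /=.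
rewrite (eq_bigr (fun _ => 1)) ?sum_nat_const ?card_ord ?muln1 // => k _.
have := sum_ind xpredT (edge_in s0 s1 o k).
by under eq_bigl do rewrite andbT.
Qed.

Lemma out_split (V : finType) (s0 s1 : V -> V) (x : V * V -> nat) v :
  \sum_(e in switch_edges s0 s1 | e.1 == v) x e =
  if s0 v == s1 v then x (v, s0 v) else x (v, s0 v) + x (v, s1 v).
Proof.
rewrite (bigD1 (v, s0 v)) /=; last by rewrite memE /= !eqxx.
case: eqP => [eqs|neq].
- rewrite big1 ?addn0 // => [[a b]] /= /andP [/andP [E /eqP av]] ne.
  subst a; move: E ne; rewrite memE /= -eqs orbb => /eqP ->; by rewrite eqxx.
- rewrite (bigD1 (v, s1 v)) /=; last first.
    by rewrite memE /= eqxx orbT xpair_eqE /= eqxx /=; apply/eqP => h; apply: neq.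
  rewrite big1 ?addn0 // => [[a b]] /= /andP [/andP [/andP [E /eqP av]] ne1] ne2.
  subst a; move: E ne1 ne2; rewrite memE /= => /orP [] /eqP ->; by rewrite eqxx.
Qed.

Lemma flow_nat (V : finType) (s0 s1 : V -> V) (o d : V) (x : V * V -> nat) :
  is_switching_flow s0 s1 o d x -> forall v, v != d ->
  \sum_(e in switch_edges s0 s1 | e.1 == v) x e =
  \sum_(e in switch_edges s0 s1 | e.2 == v) x e + (v == o).
Proof.
move=> [fl _] v vd; have := fl v; rewrite (negbTE vd).
case: (v == o) => /=; lia.
Qed.

Lemma bound (V : finType) (s0 s1 : V -> V) (o d : V) (x : V * V -> nat) :
  is_switching_flow s0 s1 o d x -> forall n,
  (forall j, j < n -> run_pos s0 s1 o j != d) ->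
  forall e, e \in switch_edges s0 s1 -> run_profile s0 s1 o n e <= x e.
Proof.
move=> F; have fb := F.2; elim=> [|n IH] H e eE.
  by rewrite /run_profile big_ord0.
have {}IH : forall e, e \in switch_edges s0 s1 -> run_profile s0 s1 o n e <= x e.
  by apply: IH => j jn; apply: H; apply: ltnW.
rewrite profS; case: eqP => [<-|_]; last by rewrite addn0; apply: IH.
rewrite addn1.
have vd : run_pos s0 s1 o n != d by apply: H.
have e1 : cnt s0 s1 o n.+1 (run_pos s0 s1 o n) =
   (o == run_pos s0 s1 o n) + \sum_(k < n) (run_pos s0 s1 o k.+1 == run_pos s0 s1 o n).
  by rewrite /cnt big_ord_recl.
rewrite cntS eqxx addn1 -in_count in e1.
have le1 : \sum_(e in switch_edges s0 s1 | e.2 == run_pos s0 s1 o n) run_profile s0 s1 o n e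
   <= \sum_(e in switch_edges s0 s1 | e.2 == run_pos s0 s1 o n) x e.
  by apply: leq_sum => e' /andP [eE' _]; exact: IH.
have fl := flow_nat F vd.
rewrite out_split (eq_sym o) in fl e1.
rewrite pos_succ.
move: (run_pos s0 s1 o n) fl e1 le1 vd => v fl e1 le1 vd.
have IH0 := IH (v, s0 v). have IH1 := IH (v, s1 v).
rewrite !memE /= !eqxx ?orbT /= in IH0 IH1.
have := fb v.
case: (v == o) in e1 fl *; rewrite /= in e1 fl.
all: move: e1 le1 fl; set A := \sum_(_ in _ | _) run_profile _ _ _ _ _; set B := \sum_(_ in _ | _) x _; move=> e1 le1 fl.
all: move: fl; case: eqP => [eqs|hne] fl.
1,3: rewrite -eqs if_same prof_same //; lia.
all: have /(_ o n) [h1 h2] := @prof_split V s0 s1 _ v _ (introN eqP hne).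
all: case h: (odd (cnt s0 s1 o n v)); rewrite h in h2 => /andP [b1 b2].
all: have := IH1 erefl; have := IH0 erefl; lia.
Qed.

Theorem lemma1 (V : finType) (s0 s1 : V -> V) (o d : V) :
  o != d ->
  forall x : V * V -> nat, is_switching_flow s0 s1 o d x ->
  exists n : nat, run_terminates_at s0 s1 o d n /\
    (forall e, e \in switch_edges s0 s1 -> run_profile s0 s1 o n e <= x e).
Proof.
move=> od x F.
set T := \sum_(e in switch_edges s0 s1) x e.
have ex : exists k, run_pos s0 s1 o k == d.
  case: (boolP [exists k : 'I_T.+1, run_pos s0 s1 o k == d]) => [/existsP [k hk]|/existsPn hn].
    by exists k.
  have B := bound F (n := T.+1) (fun j jT => hn (Ordinal jT)).
  have : \sum_(e in switch_edges s0 s1) run_profile s0 s1 o T.+1 e <= T by apply: leq_sum.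
  by rewrite tot_count ltnn.
case: (ex_minnP ex) => n /eqP hn hmin.
have nd : forall k, k < n -> run_pos s0 s1 o k != d.
  move=> k kn; apply/negP => hk; have := hmin k hk; by rewrite leqNgt kn.
exists n; split; first by split.
exact: bound F n nd.
Qed.
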